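(* For all positive integers $t,s$, the complete bipartite graph $K_{4t,4s}$ has an almost 2-perfect 8-cycle decomposition.
   Context: An 8-cycle decomposition of a graph $G$ is a collection of pairwise edge-disjoint 8-cycles in $G$ whose edge sets partition $E(G)$. For an 8-cycle $C$, an inside 8-cycle of $C$ is an 8-cycle on the same vertex set as $C$ sharing no edge with $C$. An 8-cycle decomposition $\mathcal{C}$ of $G$ is almost 2-perfect (A2P) if one can choose, for each $C\in\mathcal{C}$, an inside 8-cycle $C'$ of $C$ with all edges in $G$, such that the chosen cycles $\{C'\}$ again form an 8-cycle decomposition of $G$. *)

(* Defs.v *)
From mathcomp Require Import all_boot.
Set Implicit Arguments. Unset Strict Implicit. Unset Printing Implicit Defensive.

Section Cycles.
Variables (T : finType) (e : rel T).

(* Edge set of a simple graph given by a symmetric irreflexive relation e: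
   edges are unordered pairs {x,y}, represented as 2-element sets. *)
Definition graph_edges : {set {set T}} :=
  [set [set p.1; p.2] | p in [set p : T * T | e p.1 p.2]].

Definition is_8cycle (c : seq T) : bool :=
  [&& size c == 8, uniq c & path.cycle e c].

Definition cycle_edges (c : seq T) : {set {set T}} :=
  [set [set x; next c x] | x in c].

Definition cycle_verts (c : seq T) : {set T} := [set x in c].

Definition is_8cycle_decomp (C : seq (seq T)) : Prop :=
  [/\ forall c, c \in C -> is_8cycle c,
      forall i j, i < size C -> j < size C -> i != j ->
        [disjoint cycle_edges (nth [::] C i) & cycle_edges (nth [::] C j)]
    & \bigcup_(c <- C) cycle_edges c = graph_edges].

Definition inside_8cycle (c d : seq T) : bool :=
  [&& is_8cycle d, cycle_verts d == cycle_verts c &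
      [disjoint cycle_edges d & cycle_edges c]].

Definition almost_2_perfect (C : seq (seq T)) : Prop :=
  exists D : seq (seq T),
    [/\ size D = size C,
        forall i, i < size C -> inside_8cycle (nth [::] C i) (nth [::] D i)
      & is_8cycle_decomp D].

End Cycles.

Definition Kbip_rel (m n : nat) : rel ('I_m + 'I_n)%type :=
  fun x y => match x, y with
             | inl _, inr _ | inr _, inl _ => true
             | _, _ => false
             end.

(* Main.v *)
Require Import Defs.
From mathcomp Require Import all_boot zify.
Set Implicit Arguments. Unset Strict Implicit. Unset Printing Implicit Defensive.

Lemma mk_lt n (p : 'I_n) i : 4 * p + i %% 4 < 4 * n.
Proof. have := ltn_pmod i (isT : 0 < 4); have := ltn_ord p; lia. Qed.
Definition mk n (p : 'I_n) i : 'I_(4 * n) := Ordinal (mk_lt p i).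

Lemma blk_lt n (a : 'I_(4 * n)) : a %/ 4 < n.
Proof. have := ltn_ord a; lia. Qed.
Definition blk n (a : 'I_(4 * n)) : 'I_n := Ordinal (blk_lt a).

Lemma mk_eq n (p : 'I_n) i j : (mk p i == mk p j) = (i %% 4 == j %% 4).
Proof. by rewrite -val_eqE /= eqn_add2l. Qed.
Lemma blk_mk n (p : 'I_n) i : blk (mk p i) = p.
Proof. apply: val_inj => /=. have := ltn_pmod i (isT : 0 < 4); lia. Qed.
Lemma mod_mk n (p : 'I_n) i : mk p i %% 4 = i %% 4.
Proof. rewrite /=. have := ltn_pmod i (isT : 0 < 4); lia. Qed.
Lemma mk_blk n (a : 'I_(4 * n)) : mk (blk a) a = a.
Proof. apply: val_inj => /=. lia. Qed.
Lemma mk_mod n (p : 'I_n) i : mk p (i %% 4) = mk p i.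
Proof. apply: val_inj => /=. by rewrite modn_mod. Qed.

Definition V t s := ('I_(4 * t) + 'I_(4 * s))%type.
Definition cyc t s (k : 'I_t * 'I_s * bool) : seq (V t s) :=
 let: (p, q, c) := k in
 if c then [:: inl (mk p 0); inr (mk q 1); inl (mk p 3); inr (mk q 0);
               inl (mk p 2); inr (mk q 3); inl (mk p 1); inr (mk q 2)]
 else [:: inl (mk p 0); inr (mk q 0); inl (mk p 1); inr (mk q 1);
          inl (mk p 2); inr (mk q 2); inl (mk p 3); inr (mk q 3)].
Definition col (a b : nat) : bool := 1 < (a %% 4 + 4 - b %% 4) %% 4.
Definition kab t s (a : 'I_(4 * t)) (b : 'I_(4 * s)) := (blk a, blk b, col a b).

Lemma inlE (A B : eqType) (a b : A) : (inl a == inl b :> A + B) = (a == b). Proof. by []. Qed.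
Lemma inrE (A B : eqType) (a b : B) : (inr a == inr b :> A + B) = (a == b). Proof. by []. Qed.
Lemma inlrE (A B : eqType) (a : A) (b : B) : (inl a == inr b :> A + B) = false. Proof. by []. Qed.
Lemma inrlE (A B : eqType) (a : A) (b : B) : (inr b == inl a :> A + B) = false. Proof. by []. Qed.
Definition sE := (inlE, inrE, inlrE, inrlE, mk_eq).

Lemma cyc_uniq t s k : uniq (@cyc t s k).
Proof. case: k => [[p q] []]; by rewrite /= !inE !sE. Qed.

Lemma cyc_8 t s k : is_8cycle (@Kbip_rel _ _) (@cyc t s k).
Proof. by rewrite /is_8cycle cyc_uniq; case: k => [[p q] []]. Qed.

Lemma cyc_next t s k x : x \in @cyc t s k -> exists a b,
  [set x; next (cyc k) x] = [set inl a; inr b] /\ kab a b = k.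
Proof.
case: k => [[p q] []] /=.
all: do !case/predU1P=> [->|]; (try by []); rewrite /= ?sE /=;
  match goal with |- exists a b, [set inl ?A; inr ?B] = _ /\ _ => exists A, B
  | |- exists a b, [set inr ?B; inl ?A] = _ /\ _ => exists A, B end;
  (split; [by rewrite // setUC | by rewrite /kab !blk_mk /col !mod_mk]).
Qed.

Lemma edgeI (T : finType) (e : rel T) (c : seq T) n x0 : n < size c ->
  [set nth x0 c n; next c (nth x0 c n)] \in cycle_edges c.
Proof. by move=> nc; apply/imsetP; exists (nth x0 c n); rewrite // mem_nth. Qed.

Ltac tryk c x0 k := have := @edgeI _ (fun _ _ => true) c k x0 isT;
  rewrite /= ?sE /=; first [exact: id | by rewrite setUC].

Lemma cover_aux t s (p : 'I_t) (q : 'I_s) i j : i < 4 -> j < 4 ->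
  [set inl (mk p i); inr (mk q j)] \in cycle_edges (cyc (p, q, col i j)).
Proof.
case: i => [|[|[|[|//]]]] _; case: j => [|[|[|[|//]]]] _; rewrite /col /=.
all: try match goal with |- context [cycle_edges ?c] =>
  first [tryk c (inl (mk p 0) : V t s) 0 | tryk c (inl (mk p 0) : V t s) 1
  | tryk c (inl (mk p 0) : V t s) 2 | tryk c (inl (mk p 0) : V t s) 3
  | tryk c (inl (mk p 0) : V t s) 4 | tryk c (inl (mk p 0) : V t s) 5
  | tryk c (inl (mk p 0) : V t s) 6 | tryk c (inl (mk p 0) : V t s) 7] end.
Qed.

Lemma cover t s (a : 'I_(4 * t)) (b : 'I_(4 * s)) :
  [set inl a; inr b] \in cycle_edges (cyc (kab a b)).
Proof.
have := cover_aux (blk a) (blk b) (ltn_pmod a (isT : 0 < 4)) (ltn_pmod b (isT : 0 < 4)).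
by rewrite !mk_mod !mk_blk /kab /col !modn_mod.
Qed.

Lemma edgeP t s k (X : {set V t s}) : X \in cycle_edges (cyc k) <->
  exists a b, X = [set inl a; inr b] /\ kab a b = k.
Proof.
split.
  case/imsetP=> x xc ->; exact: cyc_next.
by case=> [a [b [-> <-]]]; exact: cover.
Qed.

Lemma set_inj t s (a a' : 'I_(4 * t)) (b b' : 'I_(4 * s)) :
  [set inl a; inr b] = [set inl a'; inr b'] :> {set V t s} -> a = a' /\ b = b'.
Proof.
move=> E.
have : (inl a : V t s) \in [set inl a'; inr b'] by rewrite -E set21.
have : (inr b : V t s) \in [set inl a'; inr b'] by rewrite -E set22.
by rewrite !inE !sE ?orbF /= => /eqP -> /eqP ->.
Qed.

Lemma gedgeP t s (X : {set V t s}) : X \in graph_edges (@Kbip_rel _ _) <->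
  exists a b, X = [set inl a; inr b].
Proof.
split.
  case/imsetP=> [[[x|y] [x'|y']]] //; rewrite inE //= => _ ->.
    by exists x, y'.
  by exists x', y; rewrite setUC.
case=> [a [b ->]]; apply/imsetP; exists (inl a, inr b) => //; by rewrite inE.
Qed.

Lemma disjP (T : finType) (A B : {set T}) :
  (forall x, x \in A -> x \in B -> False) -> [disjoint A & B].
Proof.
move=> H; rewrite disjoint_subset; apply/subsetP => x xA; rewrite inE.
by apply/negP; exact: H x xA.
Qed.

Notation K t s := ((ordinal t) * (ordinal s) * bool)%type.

Lemma decomp t s (k0 : K t s) (ks : seq (K t s)) : uniq ks -> (forall k, k \in ks) ->
  is_8cycle_decomp (@Kbip_rel _ _) (map (@cyc t s) ks).
Proof.
move=> uks allk; split.
- by move=> c /mapP [k _ ->]; exact: cyc_8.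
- move=> i j; rewrite size_map => ilt jlt ij; rewrite !(nth_map k0) //.
  apply: disjP => X /edgeP [a [b [-> ka]]] /edgeP [a' [b' [/set_inj [ea eb] kb]]].
  move: ij; rewrite -(nth_uniq k0 ilt jlt uks) -ka -kb ea eb.
  by rewrite eqxx.
- apply/setP => X; rewrite big_map bigcup_seq; apply/bigcupP/idP.
    case=> k _ /edgeP [a [b [-> _]]]; apply/gedgeP; by exists a, b.
  case/gedgeP => a [b ->]; exists (kab a b) => //; exact: cover.
Qed.

Definition flip t s (k : K t s) : K t s := (k.1.1, k.1.2, ~~ k.2).
Lemma flipK t s : involutive (@flip t s).
Proof. by case=> [[p q] c]; rewrite /flip /= negbK. Qed.

Lemma inside t s (k : K t s) : inside_8cycle (@Kbip_rel _ _) (cyc k) (cyc (flip k)).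
Proof.
apply/and3P; split; first exact: cyc_8.
  case: k => [[p q] []]; rewrite /cycle_verts /flip /= eqEsubset;
  apply/andP; split; apply/subsetP => x; rewrite !inE;
  by do ?[case/orP=> [/eqP->|] | move/eqP->]; rewrite ?eqxx ?orbT.
apply: disjP => X /edgeP [a [b [-> ka]]] /edgeP [a' [b' [/set_inj [ea eb] kb]]].
move: ka kb; rewrite ea eb => ->; case: k => [[p q] c] /(f_equal snd) /=.
by case: c.
Qed.


Theorem lemma2p1 (t s : nat) : 0 < t -> 0 < s ->
  exists C : seq (seq ('I_(4 * t) + 'I_(4 * s))%type),
    is_8cycle_decomp (@Kbip_rel (4 * t) (4 * s)) C /\
    almost_2_perfect (@Kbip_rel (4 * t) (4 * s)) C.
Proof.
case: t => // t; case: s => // s _ _.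
pose k0 : K t.+1 s.+1 := (ord0, ord0, false).
exists (map (@cyc _ _) (enum [set: K t.+1 s.+1])); split.
  by apply: (decomp k0); [exact: enum_uniq | move=> k; rewrite mem_enum inE].
exists (map (@cyc _ _) (map (@flip _ _) (enum [set: K t.+1 s.+1]))); split.
- by rewrite !size_map.
- move=> i; rewrite size_map => ilt.
  by rewrite (nth_map k0) // (nth_map k0) ?size_map // (nth_map k0) //; exact: inside.
- apply: (decomp k0).
    by rewrite (map_inj_uniq (can_inj (@flipK _ _))) enum_uniq.
  by move=> k; rewrite -(flipK k) map_f // mem_enum inE.
Qed.
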